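(* Let $A=[0,1]\subseteq\mathbb R$ with the usual order, let $\neg x=\sqrt{1-x^2}$, and define a binary operation on $A$ by $x\cdot 1=x$ and $x\cdot y=\max(y-\neg x,\,0)$ for $y<1$. Then: (i) multiplication is monotone on the left: for all $x,y,z\in A$, $x\le y$ implies $z\cdot x\le z\cdot y$; (ii) for every $x\in(0,1)$, putting $y=1-\neg x$, there is no element $w\in A$ such that for all $z\in A$: $z\le w$ iff $x\cdot z\le y$. In particular, there is no binary operation $\backslash$ on $A$ with $x\cdot z\le y\iff z\le x\backslash y$ for all $x,y,z\in A$.
   Context: This is the multiplication $x\cdot y=\neg(\neg x\oplus\neg y)$ of the basic algebra on $[0,1]$ determined by the antitone involutions $\delta_1(x)=\sqrt{1-x^2}$ on $[0,1]$ and $\delta_a(x)=a-x$ on $[0,a]$ for $a<1$; the claim concerns only the explicit operation given. *)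

(* Defs.v *)
From Stdlib Require Import Reals Lra.
Open Scope R_scope.

Definition inA (x : R) : Prop := 0 <= x <= 1.

Definition negA (x : R) : R := sqrt (1 - x ^ 2).

Definition mulA (x y : R) : R :=
  if Rlt_dec y 1 then Rmax (y - negA x) 0 else x.

(* Main.v *)
Require Import Defs.
From Stdlib Require Import Reals Lra Psatz.
Open Scope R_scope.

Lemma negA_facts (x : R) : inA x -> 0 <= negA x /\ negA x * negA x = 1 - x * x.
Proof.
  intros [H0 H1]. unfold negA.
  assert (Hp : 0 <= 1 - x ^ 2) by nra.
  split. apply sqrt_pos. rewrite sqrt_sqrt; [simpl; ring| exact Hp].
Qed.

Lemma ge1 (z : R) : inA z -> 1 <= z + negA z.
Proof.
  intros Hz. destruct (negA_facts z Hz) as [H0 H1]. destruct Hz. nra.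
Qed.

Lemma part2 (x : R) : 0 < x < 1 ->
     ~ (exists w : R, inA w /\
          (forall z : R, inA z -> (z <= w <-> mulA x z <= 1 - negA x))).
Proof.
  intros Hx [w [Hw H]].
  assert (HxA : inA x) by (unfold inA; lra).
  destruct (negA_facts x HxA) as [N0 N1].
  assert (Npos : 0 < negA x) by nra.
  assert (Hgt : 1 < x + negA x) by nra.
  assert (Hw1 : w < 1).
  { destruct (Rlt_dec w 1) as [h|h]; [exact h|].
    assert (h1 : 1 <= w) by lra.
    apply (H 1) in h1; [|unfold inA; lra].
    unfold mulA in h1. destruct (Rlt_dec 1 1); lra. }
  assert (Hz : inA ((w+1)/2)) by (unfold inA in *; lra).
  assert (Hm : mulA x ((w+1)/2) <= 1 - negA x).
  { unfold mulA. destruct (Rlt_dec ((w+1)/2) 1) as [h|h]; [|lra].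
    apply Rmax_lub; [lra|]. nra. }
  apply (H _ Hz) in Hm. lra.
Qed.

Theorem mainTheorem12 :
  (* (i) left monotonicity *)
  (forall x y z : R, inA x -> inA y -> inA z -> x <= y -> mulA z x <= mulA z y) /\
  (* (ii) no residual for x in (0,1), y = 1 - ~x *)
  (forall x : R, 0 < x < 1 ->
     ~ (exists w : R, inA w /\
          (forall z : R, inA z -> (z <= w <-> mulA x z <= 1 - negA x)))) /\
  (* in particular: no binary operation \ on A with x.z <= y <-> z <= x\y *)
  ~ (exists ldiv : R -> R -> R,
       (forall x y : R, inA x -> inA y -> inA (ldiv x y)) /\
       (forall x y z : R, inA x -> inA y -> inA z ->
          (mulA x z <= y <-> z <= ldiv x y))).
Proof.
  split; [|split].
  - intros x y z Hx Hy Hz Hxy. unfold mulA.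
    pose proof (ge1 z Hz). unfold inA in *.
    destruct (Rlt_dec x 1); destruct (Rlt_dec y 1).
    + apply Rle_max_compat_r; lra.
    + apply Rmax_lub; lra.
    + lra.
    + lra.
  - exact part2.
  - intros [ld [Hin Hres]].
    assert (Hh : 0 < /2 < 1) by lra.
    apply (part2 (/2) Hh).
    assert (HxA : inA (/2)) by (unfold inA; lra).
    destruct (negA_facts _ HxA) as [N0 N1].
    assert (N2 : negA (/2) <= 1) by nra.
    assert (HyA : inA (1 - negA (/2))) by (unfold inA; lra).
    exists (ld (/2) (1 - negA (/2))). split; [apply Hin; auto|].
    intros z Hz. split; intro h; apply (Hres _ _ _ HxA HyA Hz); exact h.
Qed.
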